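(* Write $V(b,\epsilon)=\sup_{\sigma,\sigma'\ge0}D_{b,\epsilon}(\sigma,\sigma')$. For $\theta\in\mathbb{R}^m$ let $\theta^+=\max(\theta,0)$ and $\theta^-=\max(-\theta,0)$ (entrywise). Then $$-V(b,\epsilon)=\inf_{\theta\in\mathbb{R}^m}\Big[-\eta\cdot\log g^{(\theta)}+\big(b^*-(b-\epsilon)\big)\cdot\theta^+ +\big(b+\epsilon-b^*\big)\cdot\theta^-\Big],$$ where all the coefficient vectors $b^*-(b-\epsilon)$ and $b+\epsilon-b^*$ are entrywise nonnegative. If $(\sigma,\sigma')$ attains $\sup D_{b,\epsilon}$, then $\theta^{bf}=\sigma'-\sigma$ attains the infimum on the right. Moreover, for every $\theta\in\mathbb{R}^m$ and $i\in[n]$, $A_i^\top\theta=T_\theta\widehat x_i$, so $g^{(\theta)}_i$ is the softmax of $T_\theta\widehat x_i$.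
   Context: Standard setup. Let $n\ge1$, $k\ge2$, $p\ge1$ be integers and $m=p+k$. There are $n$ data points $x_1,\dots,x_n$ and $p$ rules $h^{(1)},\dots,h^{(p)}$, each a map from $\{x_1,\dots,x_n\}$ to $\{1,\dots,k\}\cup\{?\}$, where ''?'' means abstain. Let $n_j\ge1$ be the number of indices $i$ with $h^{(j)}(x_i)\neq ?$. $\Delta_k$ denotes the probability simplex in $\mathbb{R}^k$; an element $z\in\Delta_k^n\subset\mathbb{R}^{nk}$ is written $z=(z_1,\dots,z_n)$ with $z_i=(z_{i1},\dots,z_{ik})\in\Delta_k$. For $j\le p$ let $h^{(j)}\in\{0,1\}^{nk}$ also denote the vector with $h^{(j)}_{i\ell}=1$ iff $h^{(j)}(x_i)=\ell$; for $\ell\le k$ let $\vec e^{\,n}_\ell\in\{0,1\}^{nk}$ have entries $(\vec e^{\,n}_\ell)_{i\ell'}=\mathbf 1(\ell'=\ell)$. The matrix $A\in\mathbb{R}^{m\times nk}$ has rows $a^{(j)}=h^{(j)}/n_j$ for $1\le j\le p$ and $a^{(p+\ell)}=\vec e^{\,n}_\ell/n$ for $1\le\ell\le k$. For $\theta\in\mathbb{R}^m$ put $a^{(\theta)}=A^\top\theta\in\mathbb{R}^{nk}$ (entries $a^{(\theta)}_{i\ell}$) and define $g^{(\theta)}\in\Delta_k^n$ by $g^{(\theta)}_{i\ell}=\exp(a^{(\theta)}_{i\ell})/\sum_{\ell'=1}^k\exp(a^{(\theta)}_{i\ell'})$; let $\mathcal G=\{g^{(\theta)}:\theta\in\mathbb{R}^m\}$.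 A fixed ''true labeling'' $\eta\in\Delta_k^n$ is given and $b^*:=A\eta\in\mathbb{R}^m$. Given $b\in\mathbb{R}^m$ and $\epsilon\in\mathbb{R}^m$ with $\epsilon\ge0$ and $b-\epsilon\le b^*\le b+\epsilon$ (entrywise), let $P=\{z\in\Delta_k^n:\ b-\epsilon\le Az\le b+\epsilon\}$ (entrywise). Logarithms act entrywise; $z\cdot\log g=\sum_{i,\ell}z_{i\ell}\log g_{i\ell}$ with conventions $0\log 0=0$, $\log 0=-\infty$. Dual function: for $\sigma,\sigma'\in\mathbb{R}^m_{\ge0}$, $D_{b,\epsilon}(\sigma,\sigma')=(\sigma'-\sigma)\cdot b-(\sigma'+\sigma)\cdot\epsilon-\sum_{i=1}^n\log\big(\sum_{\ell=1}^k\exp(a^{(\sigma'-\sigma)}_{i\ell})\big)$. For $i\in[n]$, $A_i\in\mathbb{R}^{m\times k}$ denotes the submatrix of $A$ formed by columns $k(i-1)+1,\dots,ki$; $\widehat x_i\in\mathbb{R}^{mk}$ is $A_i$ flattened in row-major order (its $((j-1)k+\ell)$-th entry is the $(j,\ell)$ entry of $A_i$); and $T_\theta=(\theta_1 I_k,\theta_2I_k,\dots,\theta_mI_k)\in\mathbb{R}^{k\times mk}$, with $I_k$ the $k\times k$ identity. *)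

(* Defs.v *)
From HB Require Import structures.
From mathcomp Require Import all_boot all_order all_algebra.
From mathcomp Require Import all_classical all_reals.
From mathcomp Require Import ereal topology normedtype sequences exp.
Set Implicit Arguments. Unset Strict Implicit. Unset Printing Implicit Defensive.
Import Order.TTheory GRing.Theory Num.Theory.
Local Open Scope ring_scope.

(* Vectors of R^{nk} are represented as n x k matrices z with z i l = z_{il};
   i.e. the paper's column k(i-1)+l is the pair (i,l).
   Rules h^(j), j < p, are maps 'I_n -> option 'I_k (None = abstain "?").
   Row indices of A are 'I_(p+k): the first p are rule rows, the last k
   are the class rows a^{(p+l)} (split via fintype.split). *)


Lemma ord_div_lt (m k : nat) (t : 'I_(m * k)) : (t %/ k < m)%N.
Proof.
have Ht := ltn_ord t; move: (nat_of_ord t) Ht => x; clear t.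
case: k => [|k]; first by rewrite muln0.
by move=> Ht; rewrite ltn_divLR.
Qed.

Lemma ord_mod_lt (m k : nat) (t : 'I_(m * k)) : (t %% k < k)%N.
Proof.
have Ht := ltn_ord t; move: (nat_of_ord t) Ht => x; clear t.
case: k => [|k]; first by rewrite muln0.
by move=> _; rewrite ltn_mod.
Qed.

Definition ordq (m k : nat) (t : 'I_(m * k)) : 'I_m := Ordinal (ord_div_lt t).
Definition ordr (m k : nat) (t : 'I_(m * k)) : 'I_k := Ordinal (ord_mod_lt t).

Section Defs.
Variables (R : realType) (n k p : nat) (h : 'I_p -> 'I_n -> option 'I_k).

Definition nrule (j : 'I_p) : nat := #|[set i : 'I_n | h j i != None]|.

Definition hvec (j : 'I_p) : 'M[R]_(n, k) :=
  \matrix_(i, l) (if h j i == Some l then 1 else 0).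

Definition evec (l : 'I_k) : 'M[R]_(n, k) :=
  \matrix_(i, l') (if l' == l then 1 else 0).

Definition Arow (j : 'I_(p + k)) : 'M[R]_(n, k) :=
  match fintype.split j with
  | inl j' => (nrule j')%:R^-1 *: hvec j'
  | inr l => (n%:R)^-1 *: evec l
  end.

Definition Aapp (z : 'M[R]_(n, k)) : 'cV[R]_(p + k) :=
  \col_j \sum_(i < n) \sum_(l < k) Arow j i l * z i l.

Definition Atheta (theta : 'cV[R]_(p + k)) : 'M[R]_(n, k) :=
  \matrix_(i, l) \sum_(j < p + k) theta j 0 * Arow j i l.

Definition gtheta (theta : 'cV[R]_(p + k)) : 'M[R]_(n, k) :=
  \matrix_(i, l) (expR (Atheta theta i l) /
                  \sum_(l' < k) expR (Atheta theta i l')).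

Definition in_simplex_n (z : 'M[R]_(n, k)) : Prop :=
  (forall i l, 0 <= z i l) /\ (forall i, \sum_(l < k) z i l = 1).

Definition dotv (u v : 'cV[R]_(p + k)) : R := \sum_(j < p + k) u j 0 * v j 0.

Definition Ddual (b eps sigma sigma' : 'cV[R]_(p + k)) : R :=
  dotv (sigma' - sigma) b - dotv (sigma' + sigma) eps
  - \sum_(i < n) ln (\sum_(l < k) expR (Atheta (sigma' - sigma) i l)).

Definition nonneg_vec (v : 'cV[R]_(p + k)) : Prop := forall j, 0 <= v j 0.

Definition Vval (b eps : 'cV[R]_(p + k)) : \bar R :=
  ereal_sup [set (Ddual b eps s s')%:E |
             s in [set s | nonneg_vec s] & s' in [set s' | nonneg_vec s']]%classic.

Definition posp (theta : 'cV[R]_(p + k)) : 'cV[R]_(p + k) :=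
  \col_j Num.max (theta j 0) 0.
Definition negp (theta : 'cV[R]_(p + k)) : 'cV[R]_(p + k) :=
  \col_j Num.max (- theta j 0) 0.

Definition Fobj (eta : 'M[R]_(n, k)) (b eps theta : 'cV[R]_(p + k)) : R :=
  - (\sum_(i < n) \sum_(l < k) eta i l * ln (gtheta theta i l))
  + dotv (Aapp eta - (b - eps)) (posp theta)
  + dotv (b + eps - Aapp eta) (negp theta).

Definition Ablock (i : 'I_n) : 'M[R]_(p + k, k) := \matrix_(j, l) Arow j i l.

(* \hat x_i : A_i flattened row-major; entry (j-1)k+l is A_i(j,l) *)
Definition xhat (i : 'I_n) : 'cV[R]_((p + k) * k) :=
  \col_(t < (p + k) * k) Ablock i (ordq t) (ordr t).

(* T_theta = (theta_1 I_k, ..., theta_m I_k) *)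
Definition Tmat (theta : 'cV[R]_(p + k)) : 'M[R]_(k, (p + k) * k) :=
  \matrix_(l, t) (theta (ordq t) 0 * (if ordr t == l then 1 else 0)).

Definition softmax (v : 'cV[R]_k) : 'cV[R]_k :=
  \col_l (expR (v l 0) / \sum_(l' < k) expR (v l' 0)).

End Defs.

(* Main.v *)
Require Import Defs.
From HB Require Import structures.
From mathcomp Require Import all_boot all_order all_algebra.
From mathcomp Require Import all_classical all_reals.
From mathcomp Require Import ereal topology normedtype sequences exp.
From mathcomp Require Import lra.
Import Order.TTheory GRing.Theory Num.Theory.
Local Open Scope ring_scope.

Lemma Zpos (R : realType) n k p (h : 'I_p -> 'I_n -> option 'I_k) th i :
  (0 < k)%N -> 0 < \sum_(l < k) expR (Atheta h th i l) :> R.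
Proof.
case: k h th i => [//|k] h th i _.
rewrite big_ord_recl; apply: (lt_le_trans (expR_gt0 (Atheta h th i ord0))).
rewrite lerDl; apply: sumr_ge0 => l _; exact: expR_ge0.
Qed.

Lemma lng (R : realType) n k p (h : 'I_p -> 'I_n -> option 'I_k) th i l :
  (0 < k)%N -> ln (gtheta h th i l) = Atheta h th i l - ln (\sum_(l' < k) expR (Atheta h th i l')) :> R.
Proof.
move=> k0; rewrite mxE lnM ?expRK ?lnV // ?posrE ?invr_gt0 ?expR_gt0 ?Zpos //.
Qed.

Lemma etaln (R : realType) n k p (h : 'I_p -> 'I_n -> option 'I_k) th (eta : 'M[R]_(n,k)) :
  (0 < k)%N -> (forall i, \sum_(l < k) eta i l = 1) ->
  \sum_(i < n) \sum_(l < k) eta i l * ln (gtheta h th i l) =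
  dotv th (Aapp h eta) - \sum_(i < n) ln (\sum_(l' < k) expR (Atheta h th i l')).
Proof.
move=> k0 He.
have -> : \sum_(i < n) \sum_(l < k) eta i l * ln (gtheta h th i l) =
  \sum_(i < n) (\sum_(l < k) eta i l * Atheta h th i l
     - ln (\sum_(l' < k) expR (Atheta h th i l'))).
  apply: eq_bigr => i _.
  under eq_bigr => l _ do rewrite lng // mulrBr.
  by rewrite sumrB -mulr_suml He mul1r.
rewrite sumrB; congr (_ - _).
rewrite /dotv /Aapp; symmetry.
under eq_bigr => j _ do rewrite mxE mulr_sumr.
rewrite exchange_big /=; apply: eq_bigr => i _.
under eq_bigr => j _ do rewrite mulr_sumr.
rewrite exchange_big /=; apply: eq_bigr => l _.
rewrite mxE mulr_sumr; apply: eq_bigr => j _; lra.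
Qed.

Definition Gf (R : realType) n k p (h : 'I_p -> 'I_n -> option 'I_k) (th : 'cV[R]_(p+k)) :=
  \sum_(i < n) ln (\sum_(l' < k) expR (Atheta h th i l')).
Arguments Gf {R n k p}.

Lemma Dexp (R : realType) n k p (h : 'I_p -> 'I_n -> option 'I_k) (b eps s s' : 'cV[R]_(p+k)) :
  Ddual h b eps s s' = \sum_j ((s' j 0 - s j 0) * b j 0 - (s' j 0 + s j 0) * eps j 0) - Gf h (s' - s).
Proof.
rewrite /Ddual /dotv /Gf -sumrB; congr (_ - _); apply: eq_bigr => j _; by rewrite !mxE.
Qed.

Lemma Fexp (R : realType) n k p (h : 'I_p -> 'I_n -> option 'I_k) (eta : 'M[R]_(n,k)) (b eps th : 'cV[R]_(p+k)) :
  (0 < k)%N -> (forall i, \sum_(l < k) eta i l = 1) ->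
  Fobj h eta b eps th = Gf h th + \sum_j (- (th j 0 * Aapp h eta j 0)
     + (Aapp h eta j 0 - (b j 0 - eps j 0)) * Num.max (th j 0) 0
     + (b j 0 + eps j 0 - Aapp h eta j 0) * Num.max (- th j 0) 0).
Proof.
move=> k0 He; rewrite /Fobj etaln // /Gf /dotv !big_split /= sumrN.
have -> : \sum_(j < p + k) (Aapp h eta - (b - eps)) j 0 * posp th j 0
  = \sum_(j < p + k) (Aapp h eta j 0 - (b j 0 - eps j 0)) * Num.max (th j 0) 0.
  by apply: eq_bigr => j _; rewrite !mxE.
have -> : \sum_(j < p + k) (b + eps - Aapp h eta) j 0 * negp th j 0
  = \sum_(j < p + k) (b j 0 + eps j 0 - Aapp h eta j 0) * Num.max (- th j 0) 0.
  by apply: eq_bigr => j _; rewrite !mxE.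
lra.
Qed.

Lemma comp_le (R : realType) (a b e s s' : R) : 0 <= e -> 0 <= s -> 0 <= s' ->
  - ((s' - s) * a) + (a - (b - e)) * Num.max (s' - s) 0 + (b + e - a) * Num.max (- (s' - s)) 0
  <= - ((s' - s) * b - (s' + s) * e).
Proof.
move=> He Hs Hs'; rewrite /Order.max.
have P1 := mulr_ge0 He Hs; have P2 := mulr_ge0 He Hs'.
case: ltrP => H1; case: ltrP => H2; try lra.
have E : s' = s by lra.
subst s'; nra.
Qed.

Lemma comp_eq (R : realType) (a b e t : R) :
  - (t * a) + (a - (b - e)) * Num.max t 0 + (b + e - a) * Num.max (- t) 0
  = - ((Num.max t 0 - Num.max (- t) 0) * b - (Num.max t 0 + Num.max (- t) 0) * e).
Proof.
rewrite /Order.max.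
case: ltrP => H1; case: ltrP => H2; try lra.
have E : t = 0 by lra.
rewrite E; nra.
Qed.

Lemma gidx_lt (m k : nat) (j : 'I_m) (l : 'I_k) : (j * k + l < m * k)%N.
Proof.
have Hj := ltn_ord j; have Hl := ltn_ord l.
apply: (@leq_trans (j * k + k)); first by rewrite ltn_add2l.
by rewrite -mulSnr leq_mul2r Hj orbT.
Qed.

Definition gidx {m k : nat} (j : 'I_m) (l : 'I_k) : 'I_(m * k) := Ordinal (@gidx_lt m k j l).

Lemma ordq_g m k (j : 'I_m) (l : 'I_k) : ordq (gidx j l) = j.
Proof. apply: val_inj => /=; rewrite divnMDl ?divn_small ?addn0 //; exact: (leq_ltn_trans _ (ltn_ord l)). Qed.

Lemma ordr_g m k (j : 'I_m) (l : 'I_k) : ordr (gidx j l) = l.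
Proof. apply: val_inj => /=; rewrite modnMDl modn_small //. Qed.

Lemma sum_pair_ord (R : realType) m k (F : 'I_(m * k) -> R) :
  \sum_(t < m * k) F t = \sum_(j < m) \sum_(l < k) F (gidx j l).
Proof.
rewrite pair_big /=.
rewrite (reindex (fun p : 'I_m * 'I_k => gidx p.1 p.2)) //=.
apply: onW_bij; exists (fun t => (ordq t, ordr t)).
  by case=> j l /=; rewrite ordq_g ordr_g.
move=> t; apply: val_inj => /=; exact: (esym (divn_eq t k)).
Qed.

Lemma lastA (R : realType) n k p (h : 'I_p -> 'I_n -> option 'I_k) (th : 'cV[R]_(p + k)) i :
  (Ablock R h i)^T *m th = Tmat th *m xhat R h i.
Proof.
apply/colP => l; rewrite !mxE sum_pair_ord; apply: eq_bigr => j _.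
rewrite (bigD1 l) //= big1 ?addr0.
  by rewrite !mxE ordq_g ordr_g eqxx mulr1 mulrC.
move=> l' Hl; by rewrite !mxE ordr_g (negbTE Hl) mulr0 mul0r.
Qed.

Lemma AthetaE (R : realType) n k p (h : 'I_p -> 'I_n -> option 'I_k) (th : 'cV[R]_(p + k)) i l :
  Atheta h th i l = ((Ablock R h i)^T *m th) l 0.
Proof. rewrite !mxE; apply: eq_bigr => j _; by rewrite !mxE mulrC. Qed.

Lemma lastg (R : realType) n k p (h : 'I_p -> 'I_n -> option 'I_k) (th : 'cV[R]_(p + k)) i l :
  gtheta h th i l = softmax (Tmat th *m xhat R h i) l 0.
Proof.
rewrite -lastA [LHS]mxE [RHS]mxE AthetaE; congr (_ / _).
by apply: eq_bigr => l' _; rewrite AthetaE.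
Qed.

Lemma max_sub (R : realType) (t : R) : Num.max t 0 - Num.max (- t) 0 = t.
Proof. rewrite /Order.max; case: ltrP => H1; case: ltrP => H2; lra. Qed.

Lemma max_ge0 (R : realType) (t : R) : 0 <= Num.max t 0.
Proof. rewrite /Order.max; case: ltrP => H1; lra. Qed.

Lemma KD (R : realType) n k p (h : 'I_p -> 'I_n -> option 'I_k) (eta : 'M[R]_(n,k)) (b eps s s' : 'cV[R]_(p+k)) :
  (0 < k)%N -> (forall i, \sum_(l < k) eta i l = 1) -> (forall j, 0 <= eps j 0) ->
  nonneg_vec s -> nonneg_vec s' ->
  Ddual h b eps s s' <= - Fobj h eta b eps (s' - s).
Proof.
move=> k0 He Heps Hs Hs'; rewrite Dexp Fexp //.
set G := Gf h (s' - s).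
set X := \sum_j _; set Y := \sum_j _.
suff : Y <= - X by lra.
rewrite /X /Y -sumrN; apply: ler_sum => j _; rewrite !mxE.
exact: comp_le.
Qed.

Lemma KE (R : realType) n k p (h : 'I_p -> 'I_n -> option 'I_k) (eta : 'M[R]_(n,k)) (b eps th : 'cV[R]_(p+k)) :
  (0 < k)%N -> (forall i, \sum_(l < k) eta i l = 1) ->
  Ddual h b eps (negp th) (posp th) = - Fobj h eta b eps th.
Proof.
move=> k0 He.
have Eth : posp th - negp th = th by apply/colP => j; rewrite !mxE max_sub.
rewrite Dexp Fexp // Eth.
set G := Gf h th.
suff -> : \sum_(j < p + k) ((posp th j 0 - negp th j 0) * b j 0 - (posp th j 0 + negp th j 0) * eps j 0)
  = - \sum_j (- (th j 0 * Aapp h eta j 0)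
     + (Aapp h eta j 0 - (b j 0 - eps j 0)) * Num.max (th j 0) 0
     + (b j 0 + eps j 0 - Aapp h eta j 0) * Num.max (- th j 0) 0) by lra.
rewrite -sumrN; apply: eq_bigr => j _; rewrite !mxE comp_eq; lra.
Qed.

Theorem lemma1 (R : realType) (n k p : nat)
  (Hn : (1 <= n)%N) (Hk : (2 <= k)%N) (Hp : (1 <= p)%N)
  (h : 'I_p -> 'I_n -> option 'I_k)
  (Hnj : forall j : 'I_p, (1 <= nrule h j)%N)
  (eta : 'M[R]_(n, k)) (Heta : in_simplex_n eta)
  (b eps : 'cV[R]_(p + k))
  (Heps : forall j, 0 <= eps j 0)
  (Hlo : forall j, b j 0 - eps j 0 <= Aapp h eta j 0)
  (Hhi : forall j, Aapp h eta j 0 <= b j 0 + eps j 0) :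
  (- Vval h b eps = ereal_inf [set (Fobj h eta b eps theta)%:E | theta in [set: 'cV[R]_(p + k)]])%E
  /\ (forall j, 0 <= (Aapp h eta - (b - eps)) j 0)
  /\ (forall j, 0 <= (b + eps - Aapp h eta) j 0)
  /\ (forall sigma sigma' : 'cV[R]_(p + k),
        nonneg_vec sigma -> nonneg_vec sigma' ->
        (Ddual h b eps sigma sigma')%:E = Vval h b eps ->
        (Fobj h eta b eps (sigma' - sigma))%:E =
          ereal_inf [set (Fobj h eta b eps theta)%:E | theta in [set: 'cV[R]_(p + k)]])
  /\ (forall (theta : 'cV[R]_(p + k)) (i : 'I_n),
        (Ablock R h i)^T *m theta = Tmat theta *m xhat R h i
        /\ (forall l : 'I_k, gtheta h theta i l = softmax (Tmat theta *m xhat R h i) l 0)).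
Proof.
have k0 : (0 < k)%N by apply: leq_trans Hk.
have He : forall i, \sum_(l < k) eta i l = 1 by case: Heta.
set SF := [set (Fobj h eta b eps theta)%:E | theta in [set: 'cV[R]_(p + k)]]%classic.
have HV : Vval h b eps = ereal_sup (-%E @` SF)%classic.
  apply/eqP; rewrite eq_le; apply/andP; split.
    apply: ge_ereal_sup => z [s Hs [s' Hs' <-]].
    apply: le_ereal_sup_tmp; exists (- (Fobj h eta b eps (s' - s))%:E)%E.
      by exists (Fobj h eta b eps (s' - s))%:E => //; exists (s' - s).
    rewrite lee_fin; exact: KD.
  apply: ge_ereal_sup => z [x [th _ <-] <-].
  apply: le_ereal_sup_tmp; exists (Ddual h b eps (negp th) (posp th))%:E.
    exists (negp th); first by move=> j; rewrite mxE max_ge0.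
    exists (posp th); first by move=> j; rewrite mxE max_ge0.
    by [].
  by rewrite (@KE _ _ _ _ h eta b eps th k0 He).
have H1 : (- Vval h b eps = ereal_inf SF)%E by rewrite HV.
split; first exact: H1.
split; first by move=> j; move: (Hlo j); rewrite !mxE; lra.
split; first by move=> j; move: (Hhi j); rewrite !mxE; lra.
split.
  move=> s s' Hs Hs' HD.
  rewrite -H1 -HD.
  apply/eqP; rewrite eq_le; apply/andP; split.
    rewrite lee_fin; have := @KD _ _ _ _ h eta b eps s s' k0 He Heps Hs Hs'; lra.
  rewrite HD H1; apply: ereal_inf_lbound; by exists (s' - s).
move=> th i; split; [exact: lastA | move=> l; exact: lastg].
Qed.
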